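(* Let $G$ be a vigorous approximately full subgroup of $\operatorname{Homeo}(\mathfrak{C})$. Then $G$ is strongly approximately full. Consequently, for vigorous subgroups of $\operatorname{Homeo}(\mathfrak{C})$, being approximately full and being strongly approximately full are equivalent.
   Context: $\mathfrak{C}$ denotes a Cantor space (a space homeomorphic to $\{0,1\}^\omega$). Groups of homeomorphisms act on the right. $K_{\mathfrak{C}}$ denotes the set of non-empty proper clopen subsets of $\mathfrak{C}$. For $\gamma\in\operatorname{Homeo}(\mathfrak{C})$, $\operatorname{supp}(\gamma)=\{p\in\mathfrak{C}: p\gamma\neq p\}$. A subset $S\subseteq \operatorname{Homeo}(\mathfrak{C})$ is vigorous if for all clopen $A,B,C\subseteq\mathfrak{C}$ with $B,C$ non-empty proper subsets of $A$ there is $\gamma\in S$ with $\operatorname{supp}(\gamma)\subseteq A$ and $B\gamma\subseteq C$. $G$ is approximately full if whenever $\Gamma\subseteq G$ is finite, $\{D_\gamma\}_{\gamma\in\Gamma}$ is a partition of $\mathfrak{C}$ into clopen sets such that $\{D_\gamma\gamma\}_{\gamma\in\Gamma}$ is also a partition of $\mathfrak{C}$, and $\delta\in\Gamma$, there exists $\chi\in G$ with $\chi|_{D_\gamma}=\gamma|_{D_\gamma}$ for every $\gamma\in\Gamma\setminus\{\delta\}$. $G$ is strongly approximately full if for all $D,R\in K_{\mathfrak{C}}$, every finite $\Gamma\subseteq G$ and every partition $\{D_\gamma\}_{\gamma\in\Gamma}$ of $D$ into clopen sets such that $\{D_\gamma\gamma\}_{\gamma\in\Gamma}$ is a partition of $R$,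 there exists $\chi\in G$ with $\chi|_{D_\gamma}=\gamma|_{D_\gamma}$ for every $\gamma\in\Gamma$. *)

(* Defs.v *)
From HB Require Import structures.
From mathcomp Require Import all_boot all_order all_algebra.
From mathcomp Require Import all_classical all_reals all_analysis.
Set Implicit Arguments. Unset Strict Implicit. Unset Printing Implicit Defensive.
Local Open Scope classical_set_scope.

Notation CS := cantor_space.

(* Homeomorphisms of the Cantor space (p gamma is written [gamma p];
   the right action convention only affects the order of composition). *)
Definition homeo (f : CS -> CS) : Prop :=
  exists g : CS -> CS, [/\ cancel f g, cancel g f, continuous f & continuous g].

Definition homeo_subgroup (G : set (CS -> CS)) : Prop :=
  [/\ (forall f, G f -> homeo f),
      G id,
      (forall f g, G f -> G g -> G (g \o f)) &
      (forall f, G f -> exists2 h, G h & cancel f h /\ cancel h f)].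

Definition supp (f : CS -> CS) : set CS := [set p | f p <> p].

Definition KC (A : set CS) : Prop := [/\ clopen A, A !=set0 & A <> setT].

Definition vigorous (S : set (CS -> CS)) : Prop :=
  forall A B C : set CS, clopen A -> clopen B -> clopen C ->
    B `<=` A -> B !=set0 -> B <> A ->
    C `<=` A -> C !=set0 -> C <> A ->
    exists2 g, S g & supp g `<=` A /\ g @` B `<=` C.

Definition clopen_partition (Gam : set (CS -> CS)) (P : (CS -> CS) -> set CS)
    (X : set CS) : Prop :=
  [/\ (forall g, Gam g -> clopen (P g)),
      (forall g, Gam g -> P g !=set0),
      (forall g h, Gam g -> Gam h -> g <> h -> P g `&` P h = set0) &
      \bigcup_(g in Gam) P g = X].

Definition approximately_full (G : set (CS -> CS)) : Prop :=
  forall (Gam : set (CS -> CS)) (D : (CS -> CS) -> set CS) (d : CS -> CS),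
    finite_set Gam -> Gam `<=` G ->
    clopen_partition Gam D setT ->
    clopen_partition Gam (fun g => g @` D g) setT ->
    Gam d ->
    exists2 chi, G chi &
      forall g, Gam g -> g <> d -> forall x, D g x -> chi x = g x.

Definition strongly_approximately_full (G : set (CS -> CS)) : Prop :=
  forall (Dom R : set CS) (Gam : set (CS -> CS)) (D : (CS -> CS) -> set CS),
    KC Dom -> KC R ->
    finite_set Gam -> Gam `<=` G ->
    clopen_partition Gam D Dom ->
    clopen_partition Gam (fun g => g @` D g) R ->
    exists2 chi, G chi &
      forall g, Gam g -> forall x, D g x -> chi x = g x.

(* Main.v *)
Require Import Defs.
From mathcomp Require Import all_boot all_order all_algebra.
From mathcomp Require Import all_classical all_reals all_analysis.
Set Implicit Arguments. Unset Strict Implicit. Unset Printing Implicit Defensive.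
Local Open Scope classical_set_scope.

Lemma homeo_image_clopen (f : CS -> CS) (A : set CS) :
  homeo f -> clopen A -> clopen (f @` A).
Proof.
case=> g [fg gf cf cg] cA.
have -> : f @` A = g @^-1` A.
  apply/seteqP; split => x.
  - by case=> y Ay <-; rewrite /= fg.
  - by move=> Agx; exists (g x) => //; rewrite gf.
exact: preimage_clopen.
Qed.

Definition finv (f : CS -> CS) : CS -> CS :=
  match pselect (exists h, cancel f h /\ cancel h f) with
  | left e => proj1_sig (cid e)
  | right _ => id end.

Lemma finvP (f : CS -> CS) : (exists h, cancel f h /\ cancel h f) ->
  cancel f (finv f) /\ cancel (finv f) f.
Proof.
rewrite /finv; case: pselect => // e _.
by case: (cid e).
Qed.

Lemma finvG (G : set (CS -> CS)) f : homeo_subgroup G -> G f ->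
  [/\ G (finv f), cancel f (finv f) & cancel (finv f) f].
Proof.
case=> _ _ _ hinv Gf.
have [h Gh [fh hf]] := hinv f Gf.
have [fi if_] := finvP (ex_intro _ h (conj fh hf)).
have -> : finv f = h.
  by apply: funext => y; rewrite -[in LHS](hf y) fi.
by split.
Qed.

Lemma part_clopen (I : Type) (S Q : set I) (P : I -> set CS) :
  (forall i, S i -> clopen (P i)) ->
  (forall i j, S i -> S j -> i <> j -> P i `&` P j = set0) ->
  \bigcup_(i in S) P i = setT -> Q `<=` S ->
  clopen (\bigcup_(i in Q) P i).
Proof.
move=> cP dP covP QS; split.
  by apply: bigcup_open => i /QS /cP [].
have -> : \bigcup_(i in Q) P i = ~` \bigcup_(i in S `\` Q) P i.
  apply/seteqP; split => x.
  - case=> i Qi Pix [j [Sj nQj] Pjx].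
    have ij : i <> j by move=> e; apply: nQj; rewrite -e.
    have := dP i j (QS _ Qi) Sj ij.
    by move=> /seteqP [+ _] => /(_ x (conj Pix Pjx)).
  - move=> nx.
    have : (\bigcup_(i in S) P i) x by rewrite covP.
    case=> i Si Pix; exists i => //.
    apply: contrapT => nQi; apply: nx; exists i => //.
rewrite closedC; apply: bigcup_open => i [/cP [] ] //.
Qed.

Lemma merge_partition (I : Type) (S : set I) (f : I -> CS -> CS)
    (Q : I -> set CS) :
  (forall i, S i -> clopen (Q i)) ->
  (forall i j, S i -> S j -> i <> j -> Q i `&` Q j = set0) ->
  \bigcup_(i in S) Q i = setT ->
  clopen_partition (f @` [set i | S i /\ Q i !=set0])
    (fun g => \bigcup_(i in [set i | S i /\ f i = g]) Q i) setT.
Proof.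
move=> cQ dQ covQ; split.
- move=> g _; apply: (part_clopen cQ dQ covQ) => i [] //.
- by move=> g [i [Si [x Qx]] <-]; exists x; exists i.
- move=> g h _ _ gh; apply/seteqP; split => // x [[i [Si fi] Qix] [j [Sj fj] Qjx]].
  have ij : i <> j by move=> e; apply: gh; rewrite -fi -fj e.
  have := dQ i j Si Sj ij.
  by move=> /seteqP [+ _] => /(_ x (conj Qix Qjx)).
- apply/seteqP; split => // x _.
  have : (\bigcup_(i in S) Q i) x by rewrite covQ.
  case=> i Si Qix; exists (f i); first by exists i => //; split => //; exists x.
  by exists i.
Qed.

Lemma AF_gen (G : set (CS -> CS)) (I : Type) (S : set I) (f : I -> CS -> CS)
    (P : I -> set CS) (i0 : I) :
  approximately_full G -> finite_set S ->
  (forall i, S i -> G (f i)) ->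
  (forall i, S i -> clopen (P i)) ->
  (forall i j, S i -> S j -> i <> j -> P i `&` P j = set0) ->
  \bigcup_(i in S) P i = setT ->
  (forall i, S i -> clopen (f i @` P i)) ->
  (forall i j, S i -> S j -> i <> j -> f i @` P i `&` f j @` P j = set0) ->
  \bigcup_(i in S) f i @` P i = setT ->
  S i0 -> P i0 !=set0 ->
  exists2 chi, G chi &
    forall i, S i -> f i <> f i0 -> forall x, P i x -> chi x = f i x.
Proof.
move=> af finS GS cP dP covP cI dI covI Si0 Pi0.
pose Gam := f @` [set i | S i /\ P i !=set0].
pose D := fun g => \bigcup_(i in [set i | S i /\ f i = g]) P i.
have eGam : Gam = f @` [set i | S i /\ (f i @` P i) !=set0].
  congr (_ @` _); apply/seteqP; split => i [Si [x Px]]; split => //.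
  - by exists (f i x); exists x.
  - by case: Px => y Py _; exists y.
have imD : forall g, g @` D g = \bigcup_(i in [set i | S i /\ f i = g]) f i @` P i.
  move=> g; apply/seteqP; split => y.
  - by case=> x [i [Si fi] Pix] <-; exists i => //; exists x => //; rewrite fi.
  - by case=> i [Si fi] [x Pix <-]; exists x; [exists i|rewrite fi].
have h1 : finite_set Gam.
  by apply: finite_image; apply: sub_finite_set finS => i [].

have h2 : Gam `<=` G.
  by move=> g; rewrite /Gam => -[j [Sj _] <-]; exact: GS.
have h3 : clopen_partition Gam D setT by exact: merge_partition.
have h4 : clopen_partition Gam (fun g => g @` D g) setT.
  rewrite (_ : (fun g => g @` D g) = (fun g => \bigcup_(i in [set i | S i /\ f i = g]) f i @` P i)); last by apply: funext => g; rewrite imD.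
  rewrite eGam.
  exact: (@merge_partition I S f (fun i => f i @` P i)).
have h5 : Gam (f i0) by rewrite /Gam; exists i0 => //; split.
have [chi Gchi H] := af Gam D (f i0) h1 h2 h3 h4 h5.
exists chi => // i Si fi x Pix.
apply: H.
- by exists i => //; split => //; exists x.
- exact: fi.
- by exists i.
Qed.

Lemma part_minus (Gam : set (CS -> CS)) (Q : (CS -> CS) -> set CS) d :
  clopen_partition Gam Q setT -> Gam d ->
  clopen_partition (Gam `\ d) Q (~` Q d).
Proof.
move=> [c ne dj cov] Gd; split.
- by move=> g [Gg _]; exact: c.
- by move=> g [Gg _]; exact: ne.
- by move=> g h [Gg _] [Gh _]; exact: dj.
- apply/seteqP; split => x.
  + case=> g [Gg gd] Qgx Qdx.
    have := dj g d Gg Gd gd.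
    by move=> /seteqP [+ _] => /(_ x (conj Qgx Qdx)).
  + move=> nQ.
    have : (\bigcup_(g in Gam) Q g) x by rewrite cov.
    case=> g Gg Qgx; exists g => //; split => // /= gd.
    by apply: nQ; rewrite -gd.
Qed.

Lemma KC_compl (Gam : set (CS -> CS)) (Q : (CS -> CS) -> set CS) d g0 :
  clopen_partition Gam Q setT -> Gam d -> Gam g0 -> g0 <> d -> KC (~` Q d).
Proof.
move=> [c ne dj cov] Gd Gg0 g0d; split.
- by apply: (@clopenC _ _ set0); exact: c.
- have [x Qx] := ne g0 Gg0; exists x => Qdx.
  have := dj g0 d Gg0 Gd g0d.
  by move=> /seteqP [+ _] => /(_ x (conj Qx Qdx)).
- move=> e; have [y Qy] := ne d Gd.
  have : (~` Q d) y by rewrite e.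
  by apply.
Qed.

Lemma SAF_AF (G : set (CS -> CS)) :
  strongly_approximately_full G -> approximately_full G.
Proof.
move=> saf Gam D d finGam GamG PD PI Gd.
case: (pselect (exists2 g, Gam g & g <> d)) => [[g0 Gg0 g0d]|nog]; last first.
  exists d; first exact: GamG.
  by move=> g Gg gd; exfalso; apply: nog; exists g.
have [chi Gchi H] := saf (~` D d) (~` (d @` D d)) (Gam `\ d) D
  (KC_compl PD Gd Gg0 g0d) (KC_compl PI Gd Gg0 g0d)
  (sub_finite_set (@subDsetl _ Gam [set d]) finGam)
  (fun g Gg => GamG g (proj1 Gg))
  (part_minus PD Gd) (part_minus PI Gd).
exists chi => // g Gg gd; apply: H; split => //.
Qed.

Lemma sep (a b : CS) : a <> b -> exists2 U : set CS, clopen U & U a /\ ~ U b.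
Proof.
move=> ab; have := @cantor_zero_dimensional a b.
case; first by apply/eqP.
by move=> U [cU Ua nUb]; exists U.
Qed.

Lemma other (U : set CS) (a : CS) : open U -> U a -> exists2 r, U r & r <> a.
Proof.
move=> oU Ua.
have [x [y [Ux Uy /eqP xy]]] := (perfectTP_ex.1 cantor_perfect) U oU (ex_intro _ a Ua).
case: (pselect (x = a)) => [xa|xa]; last by exists x.
by exists y => // ya; apply: xy; rewrite xa ya.
Qed.

Lemma points (E F : set CS) : open E -> open F -> E !=set0 -> F !=set0 ->
  exists U1 U2 r, [/\ clopen U1, clopen U2, (E `&` U1) !=set0,
     (F `&` U2) !=set0 & [/\ U1 `&` U2 = set0, ~ U1 r & ~ U2 r]].
Proof.
move=> oE oF [a Ea] [b' Fb'].
have [b Fb ab] : exists2 b, F b & a <> b.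
  case: (pselect (a = b')) => [e|ne]; last by exists b'.
  have [b Fb bb'] := other oF Fb'.
  by exists b => // e'; apply: bb'; rewrite -e' e.
have [V1 cV1 [V1a nV1b]] := sep ab.
have [r V1r ra] := other (proj1 cV1) V1a.
have rb : r <> b by move=> e; apply: nV1b; rewrite -e.
have [V2 cV2 [V2a nV2r]] := sep (nesym ra).
have [V3 cV3 [V3b nV3r]] := sep (nesym rb).
exists (V1 `&` V2), (~` V1 `&` V3), r; split.
- exact: clopenI.
- by apply: clopenI cV3; exact: (@clopenC _ V1 set0 cV1).
- by exists a.
- by exists b.
- split.
  + by apply/seteqP; split => // x [[V1x _] [nV1x _]]; exact: nV1x.
  + by case=> _ /nV2r.
  + by case=> _ /nV3r.
Qed.

Definition idxT := option (bool * (CS -> CS)).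

Definition swI (i : idxT) : idxT :=
  match i with None => None | Some (b, g) => Some (~~ b, g) end.

Definition Sidx (Gam : set (CS -> CS)) : set idxT :=
  fun i => match i with None => True | Some (_, g) => Gam g end.

Definition fidx (c1 c2 : CS -> CS) (i : idxT) : CS -> CS :=
  match i with
  | None => id
  | Some (true, g) => c2 \o g \o finv c1
  | Some (false, g) => c1 \o finv g \o finv c2 end.

Definition Pidx (c1 c2 : CS -> CS) (D : (CS -> CS) -> set CS) (Z : set CS)
  (i : idxT) : set CS :=
  match i with
  | None => Z
  | Some (true, g) => c1 @` D g
  | Some (false, g) => c2 @` (g @` D g) end.

Lemma AF_SAF (G : set (CS -> CS)) :
  homeo_subgroup G -> vigorous G -> approximately_full G ->
  strongly_approximately_full G.
Proof.
move=> hG vig af Dom R Gam D [cDom neDom DomT] [cR neR RT] finGam GamG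
  [Dc Dne Ddj Dcov] [Ic Ine Idj Icov].
have hG' := hG; case: hG' => hom Gid Gcomp _.
have neC : forall A : set CS, A <> setT -> (~` A) !=set0.
  move=> A AT; apply: contrapT => h; apply: AT; apply/seteqP; split => // x _.
  by apply: contrapT => nx; apply: h; exists x.
have oC : forall A : set CS, clopen A -> open (~` A).
  by move=> A [_ cA]; rewrite openC.
have [U1 [U2 [r [cU1 cU2 neC1 neC2 [dU nU1r nU2r]]]]] :=
  points (oC _ cDom) (oC _ cR) (neC _ DomT) (neC _ RT).
have clC : forall A : set CS, clopen A -> clopen (~` A).
  by move=> A cA; exact: (@clopenC _ A set0 cA).
have [c1 Gc1 [_ sub1]] := vig setT Dom (~` Dom `&` U1) clopenT cDom
  (clopenI (clC _ cDom) cU1) (@subsetT _ _) neDom DomT (@subsetT _ _) neC1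
  (fun e => nU1r (proj2 (eq_ind_r (fun X => X r) I e))).
have [c2 Gc2 [_ sub2]] := vig setT R (~` R `&` U2) clopenT cR
  (clopenI (clC _ cR) cU2) (@subsetT _ _) neR RT (@subsetT _ _) neC2
  (fun e => nU2r (proj2 (eq_ind_r (fun X => X r) I e))).
have [Gc1' c1K c1K'] := finvG hG Gc1.
have [Gc2' c2K c2K'] := finvG hG Gc2.
pose M1 := c1 @` Dom; pose M2 := c2 @` R.
have M12 : forall x, M1 x -> M2 x -> False.
  move=> x /sub1 [_ U1x] /sub2 [_ U2x].
  by have := dU; move=> /seteqP [+ _] => /(_ x (conj U1x U2x)).
pose Z := ~` (M1 `|` M2).
have Zr : Z r by move=> [/sub1 [] //|/sub2 [] //].
have DDom : forall g, Gam g -> D g `<=` Dom.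
  by move=> g Gg x Dx; rewrite -Dcov; exists g.
have IR : forall g, Gam g -> g @` D g `<=` R.
  by move=> g Gg x Dx; rewrite -Icov; exists g.
pose S := Sidx Gam.
pose f := fidx c1 c2.
pose P := Pidx c1 c2 D Z.
have finS : finite_set S.
  have -> : S = [set None] `|` ((fun g => Some (true, g)) @` Gam `|`
      (fun g => Some (false, g)) @` Gam).
    apply/seteqP; split => [[[[] g]|]|] //=.
    - by move=> Gg; right; left; exists g.
    - by move=> Gg; right; right; exists g.
    - by move=> _; left.
    - by move=> x [->|[[g Gg <-]|[g Gg <-]]].
  rewrite !finite_setU; split; first exact: finite_set1.
  by split; exact: finite_image.
have GS : forall i, S i -> G (f i).
  move=> [[[] g]|] //= Gg; rewrite /f /fidx.
  - by apply: (Gcomp) => //; apply: (Gcomp) => //; exact: GamG.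
  - apply: (Gcomp) => //; apply: (Gcomp) => //.
    by have [] := finvG hG (GamG g Gg).
have cP : forall i, S i -> clopen (P i).
  move=> [[[] g]|] //= Gg; rewrite /P /Pidx.
  - exact: homeo_image_clopen (hom _ Gc1) (Dc g Gg).
  - exact: homeo_image_clopen (hom _ Gc2) (Ic g Gg).
  - apply: (clC); apply: clopenU.
    + exact: homeo_image_clopen (hom _ Gc1) cDom.
    + exact: homeo_image_clopen (hom _ Gc2) cR.
have imE : forall i, S i -> f i @` P i = P (swI i).
  move=> [[[] g]|] //= Gg; rewrite /f /P /fidx /Pidx /=.
  - apply/seteqP; split => y.
    + by case=> _ [x Dx <-] <-; exists (g x); [exists x|rewrite /= c1K].
    + by case=> _ [x Dx <-] <-; exists (c1 x); [exists x|rewrite /= c1K].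
  - have [_ gK gK'] := finvG hG (GamG g Gg).
    apply/seteqP; split => y.
    + by case=> _ [_ [x Dx <-] <-] <-; exists x => //=; rewrite c2K gK.
    + by case=> x Dx <-; exists (c2 (g x)); [exists (g x)|rewrite /= c2K gK].
  - exact: image_id.
have swS : forall i, S i -> S (swI i) by move=> [[b g]|].
have swK : forall i, swI (swI i) = i by move=> [[b g]|] //=; rewrite negbK.
have uniqP : forall i j x, S i -> S j -> P i x -> P j x -> i = j.
  move=> [[[] g]|] [[[] h]|] x //= Si Sj; rewrite /P /Pidx.
  - case=> y Dy <- [y' Dy' e].
    have yy : y' = y by rewrite -(c1K y') e c1K.
    subst y'; case: (pselect (h = g)) => [->//|hg].
    have := Ddj h g Sj Si hg.
    by move=> /seteqP [+ _] => /(_ y (conj Dy' Dy)).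
  - move=> [y Dy <-] [_ [y' Dy' <-] e]; exfalso; apply: (M12 (c1 y)).
    + by exists y => //; exact: (DDom g Si y Dy).
    + by rewrite -e; exists (h y') => //; apply: (IR h Sj); exists y'.
  - move=> [y Dy <-] Zx; exfalso; apply: Zx; left; exists y => //; exact: (DDom g Si y Dy).
  - move=> [_ [y' Dy' <-] e] [y Dy e']; exfalso; apply: (M12 (c1 y)).
    + by exists y => //; exact: (DDom h Sj y Dy).
    + by rewrite e' -e; exists (g y') => //; apply: (IR g Si); exists y'.
  - case=> _ [y Dy <-] <- [_ [y' Dy' <-] e].
    have yy : h y' = g y by rewrite -(c2K (h y')) e c2K.
    case: (pselect (h = g)) => [->//|hg].
    have := Idj h g Sj Si hg.
    move=> /seteqP [+ _] => /(_ (g y)) H; exfalso; apply: H; split.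
    + by rewrite -yy; exists y'.
    + by exists y.
  - move=> [_ [y Dy <-] <-] Zx; exfalso; apply: Zx; right.
    by exists (g y) => //; apply: (IR g Si); exists y.
  - move=> Zx [y Dy exy]; exfalso; apply: Zx; rewrite -exy; left; exists y => //; exact: (DDom h Sj y Dy).
  - move=> Zx [z [y Dy <-] exy]; exfalso; apply: Zx; rewrite -exy; right.
    by exists (h y) => //; apply: (IR h Sj); exists y.
have dP : forall i j, S i -> S j -> i <> j -> P i `&` P j = set0.
  move=> i j Si Sj ij; apply/seteqP; split => // x [Pix Pjx].
  by apply: ij; exact: uniqP Pix Pjx.
have covP : \bigcup_(i in S) P i = setT.
  apply/seteqP; split => // x _.
  case: (pselect (M1 x)) => [[y Domy <-]|nM1].
    move: Domy; rewrite -Dcov => -[g Gg Dgy].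
    by exists (Some (true, g)) => //; exists y.
  case: (pselect (M2 x)) => [[y Ry <-]|nM2].
    move: Ry; rewrite -Icov => -[g Gg [z Dz <-]].
    by exists (Some (false, g)) => //; exists (g z) => //; exists z.
  by exists None => //= -[].
have covI : \bigcup_(i in S) f i @` P i = setT.
  apply/seteqP; split => // x _.
  have : (\bigcup_(i in S) P i) x by rewrite covP.
  case=> j Sj Pjx; exists (swI j); first exact: swS.
  by rewrite imE ?swK //; exact: swS.
have [sig Gsig Hsig] := AF_gen (i0 := None) af finS GS cP dP covP
  (fun i Si => eq_ind_r clopen (cP _ (swS i Si)) (imE i Si))
  (fun i j Si Sj ij => eq_ind_r (fun X => X `&` _ = set0)
     (eq_ind_r (fun X => _ `&` X = set0)
       (dP _ _ (swS i Si) (swS j Sj) (fun e => ij (etrans (esym (swK i)) (etrans (f_equal swI e) (swK j)))))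
       (imE j Sj)) (imE i Si))
  covI I (ex_intro _ r Zr).
exists (finv c2 \o sig \o c1).
  by apply: (Gcomp) => //; apply: (Gcomp).
move=> g Gg x Dx.
have nid : f (Some (true, g)) <> f None.
  rewrite /f /fidx => e.
  have : (c2 \o g \o finv c1) (c1 x) = c1 x by rewrite e.
  rewrite /= c1K => e'; apply: (M12 (c1 x)).
  + by exists x => //; exact: (DDom g Gg x Dx).
  + by rewrite -e'; exists (g x) => //; apply: (IR g Gg); exists x.
rewrite /= (Hsig (Some (true, g)) Gg nid (c1 x)); last by exists x.
by rewrite /f /fidx /= c1K c2K.
Qed.

Theorem corollary2p13 (G : set (CS -> CS)) :
  homeo_subgroup G -> vigorous G ->
  (approximately_full G -> strongly_approximately_full G) /\
  (approximately_full G <-> strongly_approximately_full G).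
Proof.
move=> hG vig; split; first exact: AF_SAF.
split; [exact: AF_SAF | exact: SAF_AF].
Qed.
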